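(* Suppose the standing assumptions (1)–(5) below hold, and that both the feature and all edges incident to the $g_n$-th node of the $n$-th training graph must be unlearned: the updated dataset is $\mathcal{D}'=(\mathbf{Z}',\mathbf{y})$ with $\mathbf{z}_i'=\mathbf{z}_i$ for $i<n$ and $\mathbf{z}_n'=\Phi(\mathbf{S}_n',\mathbf{x}_n')$, where $\mathbf{x}_n'$ agrees with $\mathbf{x}_n$ except $[\mathbf{x}_n']_{g_n}=0$, and $\mathbf{S}_n'$ is obtained from $\mathbf{S}_n$ by setting the $g_n$-th row and column to zero. Then the updated model $\mathbf{w}'=\mathbf{w}^\star+\mathbf{H}_{\mathbf{w}^\star}^{-1}\Delta$ satisfies $$\|\nabla L(\mathbf{w}',\mathcal{D}')\|\leq \frac{4\gamma_2 C_1^2F^3}{\lambda^2 n},\qquad F=\sqrt{\sum_{l=0}^{L-1}B^{2l}},$$ where $B$ is the upper frame constant of the graph wavelets used in the GST.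
   Context: Setting (graph classification). There are $n$ training graphs $\mathcal{G}_1,\dots,\mathcal{G}_n$. Graph $\mathcal{G}_i$ has $g_i$ nodes, a symmetric adjacency matrix $\mathbf{S}_i\in\mathbb{R}^{g_i\times g_i}$ (the graph shift operator), a node signal $\mathbf{x}_i\in\mathbb{R}^{g_i}$ (one scalar feature per node) and a label $y_i$. Graph scattering transform (GST). Fix positive integers $J,L$ and wavelet kernel functions $h_1,\dots,h_J:\mathbb{R}\to\mathbb{R}$. For a symmetric $\mathbf{S}=\mathbf{V}\mathbf{\Lambda}\mathbf{V}^T$ with eigenvalues $\lambda_1,\dots,\lambda_g$, set $\mathbf{H}_j(\mathbf{S})=\mathbf{V}\,\mathrm{diag}(h_j(\lambda_1),\dots,h_j(\lambda_g))\mathbf{V}^T$. The wavelets form a frame: there are constants $0<A\le B$ with $A^2\|\mathbf{x}\|^2\le\sum_{j=1}^J\|\mathbf{H}_j(\mathbf{S})\mathbf{x}\|^2\le B^2\|\mathbf{x}\|^2$ for all $\mathbf{x}$ (for all shift operators considered). Let $\rho$ be the entrywise absolute value. For a path $p=(j_1,\dots,j_l)$ with $j_k\in\{1,\dots,J\}$ and $0\le l\le L-1$, define $\Phi_{()}(\mathbf{S},\mathbf{x})=\mathbf{x}$ and $\Phi_{(j_1,\dots,j_l)}(\mathbf{S},\mathbf{x})=\rho\big(\mathbf{H}_{j_l}(\mathbf{S})\Phi_{(j_1,\dots,j_{l-1})}(\mathbf{S},\mathbf{x})\big)$, and the scalar coefficient $\phi_p(\mathbf{S},\mathbf{x})=U\Phi_p(\mathbf{S},\mathbf{x})$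 with the averaging operator $U=\frac{1}{g}\mathbf{1}^T$ ($g$ the number of nodes). The embedding $\Phi(\mathbf{S},\mathbf{x})\in\mathbb{R}^d$, $d=\sum_{l=0}^{L-1}J^l$, is the concatenation of all $\phi_p(\mathbf{S},\mathbf{x})$. Set $\mathbf{z}_i=\Phi(\mathbf{S}_i,\mathbf{x}_i)$, let $\mathbf{Z}$ have rows $\mathbf{z}_i^T$, and $\mathcal{D}=(\mathbf{Z},\mathbf{y})$. Learning and update. $\ell(s,y)$ is convex and twice differentiable in $s$; $\ell'$, $\ell''$ denote derivatives in $s$, and $\nabla$, $\nabla^2$ denote gradient/Hessian in $\mathbf{w}$. For a dataset $\mathcal{D}=(\mathbf{Z},\mathbf{y})$, $L(\mathbf{w},\mathcal{D})=\sum_{i=1}^n\big(\ell(\mathbf{w}^T\mathbf{z}_i,y_i)+\frac{\lambda}{2}\|\mathbf{w}\|^2\big)$ with $\lambda>0$, and $\mathbf{w}^\star=\arg\min_{\mathbf{w}}L(\mathbf{w},\mathcal{D})$. For the updated dataset $\mathcal{D}'$, set $\mathbf{H}_{\mathbf{w}^\star}=\nabla^2L(\mathbf{w}^\star,\mathcal{D}')$ and $\Delta=\nabla L(\mathbf{w}^\star,\mathcal{D})-\nabla L(\mathbf{w}^\star,\mathcal{D}')$. Norms are $\ell_2$ for vectors and operator norm for matrices. Standing assumptions: there are constants $C_1,C_2,\gamma_1,\gamma_2$ such that for every embedding $\mathbf{z}_i$ (of $\mathcal{D}$ or $\mathcal{D}'$) and every $\mathbf{w}\in\mathbb{R}^d$: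 (1) $\|\nabla\ell(\mathbf{w}^T\mathbf{z}_i,y_i)\|\le C_1$; (2) $|\ell'(\mathbf{w}^T\mathbf{z}_i,y_i)|\le C_2$; (3) $\ell'$ is $\gamma_1$-Lipschitz; (4) $\ell''$ is $\gamma_2$-Lipschitz; (5) the signals satisfy $|[\mathbf{x}_i]_j|\le1$ for all $i$ and all $j\in\{1,\dots,g_i\}$. *)

(* Defs.v *)
From HB Require Import structures.
From mathcomp Require Import all_boot all_order all_algebra.
From mathcomp Require Import all_classical all_reals all_analysis.
Set Implicit Arguments. Unset Strict Implicit. Unset Printing Implicit Defensive.
Import Order.TTheory GRing.Theory Num.Theory.
Local Open Scope ring_scope.

Section GST.
Variable R : realType.

Definition norm2 m (v : 'cV[R]_m) : R := Num.sqrt (\sum_i v i 0 ^+ 2).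

Definition dotv m (w z : 'cV[R]_m) : R := (w^T *m z) 0 0.

Definition eigdecomp g (S : 'M[R]_g) (V : 'M[R]_g) (lam : 'rV[R]_g) : Prop :=
  V^T *m V = 1%:M /\ S = V *m diag_mx lam *m V^T.

(* Spectral graph filter H(S) = V diag(h(lam_1),...,h(lam_g)) V^T, computed from
   an (arbitrarily chosen) eigendecomposition of S; 0 if none exists (never the
   case for symmetric S). *)
Definition spec_filter g (h : R -> R) (S : 'M[R]_g) : 'M[R]_g :=
  match pselect (exists VL : 'M[R]_g * 'rV[R]_g, eigdecomp S VL.1 VL.2) with
  | left H => let VL := projT1 (cid H) in
              VL.1 *m diag_mx (map_mx h VL.2) *m VL.1^T
  | right _ => 0
  end.

(* Paths (j_1,...,j_l) with j_k in {1..J} (here 'I_J) and 0 <= l <= L-1. *)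
Definition gpath (J L : nat) := {l : 'I_L & l.-tuple 'I_J}.

Definition rho g (v : 'cV[R]_g) : 'cV[R]_g := map_mx (fun a => `|a|) v.

Definition Phi_path (J : nat) (h : 'I_J -> R -> R) g (S : 'M[R]_g)
    (x : 'cV[R]_g) (p : seq 'I_J) : 'cV[R]_g :=
  foldl (fun v j => rho (spec_filter (h j) S *m v)) x p.

(* phi_p = U Phi_p with U = (1/g) 1^T *)
Definition phi_path (J : nat) (h : 'I_J -> R -> R) g (S : 'M[R]_g)
    (x : 'cV[R]_g) (p : seq 'I_J) : R :=
  (g%:R)^-1 * \sum_a Phi_path h S x p a 0.

(* Dimension d = #|paths| = sum_{l<L} J^l. *)
Definition gdim (J L : nat) : nat := #|{: gpath J L}|.

Definition gst (J L : nat) (h : 'I_J -> R -> R) g (S : 'M[R]_g)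
    (x : 'cV[R]_g) : 'cV[R]_(gdim J L) :=
  \col_i phi_path h S x (tval (projT2 (enum_val i))).

Definition wavelet_frame (J : nat) (h : 'I_J -> R -> R) g (S : 'M[R]_g)
    (A B : R) : Prop :=
  forall x : 'cV[R]_g,
    A ^+ 2 * norm2 x ^+ 2 <= \sum_j norm2 (spec_filter (h j) S *m x) ^+ 2 /\
    \sum_j norm2 (spec_filter (h j) S *m x) ^+ 2 <= B ^+ 2 * norm2 x ^+ 2.

Definition Lobj (Y : Type) (ell : R -> Y -> R) (lam : R) n d
    (z : 'I_n -> 'cV[R]_d) (y : 'I_n -> Y) (w : 'cV[R]_d) : R :=
  \sum_i (ell (dotv w (z i)) (y i) + lam / 2 * norm2 w ^+ 2).

(* Its gradient in w (ell1 = d ell / ds). *)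
Definition gradL (Y : Type) (ell1 : R -> Y -> R) (lam : R) n d
    (z : 'I_n -> 'cV[R]_d) (y : 'I_n -> Y) (w : 'cV[R]_d) : 'cV[R]_d :=
  \sum_i (ell1 (dotv w (z i)) (y i) *: z i + lam *: w).

(* Its Hessian in w (ell2 = d^2 ell / ds^2). *)
Definition hessL (Y : Type) (ell2 : R -> Y -> R) (lam : R) n d
    (z : 'I_n -> 'cV[R]_d) (y : 'I_n -> Y) (w : 'cV[R]_d) : 'M[R]_d :=
  \sum_i (ell2 (dotv w (z i)) (y i) *: (z i *m (z i)^T) + lam%:M).

End GST.

(* Main.v *)
Require Import Defs.
From HB Require Import structures.
From mathcomp Require Import all_boot all_order all_algebra.
From mathcomp Require Import all_classical all_reals all_analysis.
From mathcomp Require Import lra ring.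
Import Order.TTheory GRing.Theory Num.Theory.
Local Open Scope ring_scope.

Set Implicit Arguments. Unset Strict Implicit.

Lemma small_nonpos (R : realType) (X K : R) : 0 <= K ->
  (forall t, 0 < t <= 1 -> X <= t * K) -> X <= 0.
Proof.
move=> K0 H; rewrite leNgt; apply/negP => X0.
have XK : 0 < X + K by lra.
have := H (X / (X + K)).
rewrite divr_gt0 // ler_pdivrMr // mul1r lerDl K0 => /(_ isT).
rewrite mulrAC ler_pdivlMr // => h; nra.
Qed.

Lemma lip_ge0 (R : realType) (df : R -> R) gam :
  (forall s t, `|df s - df t| <= gam * `|s - t|) -> 0 <= gam.
Proof.
move=> h; have := h 1 0; rewrite subr0 normr1 mulr1 => h2.
exact: le_trans (normr_ge0 _) h2.
Qed.
Lemma mvt_abs (R : realType) (f df : R -> R) (a b : R) :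
  (forall s : R, is_derive s 1 f (df s)) ->
  exists2 c, `|c - a| <= `|b - a| & f b - f a = df c * (b - a).
Proof.
move=> hd.
have dd : forall (i : interval R), {in i, forall x, derivable f x 1}.
  by move=> i z _; exact: (@ex_derive _ _ _ _ _ _ _ (hd z)).
case: (leP a b) => hab.
  have [c hc E] := MVT_segment hab (fun z _ => hd z) (derivable_within_continuous (dd _)).
  exists c => //.
  rewrite in_itv /= in hc; case/andP: hc => hc1 hc2.
  rewrite !ger0_norm ?subr_ge0 //; first by rewrite lerD2r.
have [c hc E] := MVT_segment (ltW hab) (fun z _ => hd z) (derivable_within_continuous (dd _)).
exists c.
  rewrite in_itv /= in hc; case/andP: hc => hc1 hc2.
  rewrite !ler0_norm ?subr_le0 ?(ltW hab) // !opprB.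
  by rewrite lerD2l lerN2.
have -> : f b - f a = - (f a - f b) by rewrite opprB.
by rewrite E -mulrN opprB.
Qed.

Lemma taylor1 (R : realType) (f df : R -> R) (gam a b : R) :
  (forall s : R, is_derive s 1 f (df s)) -> 0 <= gam ->
  (forall s t, `|df s - df t| <= gam * `|s - t|) ->
  `|f b - f a - df a * (b - a)| <= gam * (b - a) ^+ 2.
Proof.
move=> hd g0 hl.
have [c hc ->] := @mvt_abs R f df a b hd.
rewrite -mulrBl normrM.
apply: (le_trans (ler_wpM2r (normr_ge0 _) (hl c a))).
rewrite -mulrA ler_wpM2l // -normrM -[X in _ <= X]ger0_norm ?sqr_ge0 // expr2.

by rewrite !normrM ler_wpM2r.
Qed.

Section Conv.
Variable R : realType.
Variables (f df ddf : R -> R) (gam1 gam2 : R).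
Hypothesis hconv : forall (a b t : R), 0 <= t <= 1 ->
     f (t * a + (1 - t) * b) <= t * f a + (1 - t) * f b.
Hypothesis hd1 : forall s : R, is_derive s 1 f (df s).
Hypothesis hd2 : forall s : R, is_derive s 1 df (ddf s).
Hypothesis hl1 : forall s t, `|df s - df t| <= gam1 * `|s - t|.
Hypothesis hl2 : forall s t, `|ddf s - ddf t| <= gam2 * `|s - t|.

Lemma tangent a b : df a * (b - a) <= f b - f a.
Proof.
have g0 := @lip_ge0 _ _ _ hl1.
rewrite -subr_le0; apply: (@small_nonpos _ _ (gam1 * (b - a) ^+ 2)).
  by rewrite mulr_ge0 // sqr_ge0.
move=> t /andP[t0 t1].
have hc := @hconv b a t (introT andP (conj (ltW t0) t1)).
have ht := @taylor1 R f df gam1 a (t * b + (1 - t) * a) hd1 g0 hl1.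
have e : t * b + (1 - t) * a - a = t * (b - a) by ring.
rewrite e in ht.
move: ht; rewrite ler_norml => /andP[ht _].
rewrite -(ler_pM2l t0).
move: hc ht; set u := f _; set G := gam1 * _ => hc ht.
have -> : t * (t * (gam1 * (b - a) ^+ 2)) = G by rewrite /G; ring.
lra.
Qed.

Lemma ddf_ge0 a : 0 <= ddf a.
Proof.
have g2 := @lip_ge0 _ _ _ hl2.
rewrite -oppr_le0; apply: (@small_nonpos _ _ gam2 g2).
move=> t /andP[t0 t1].
have h1 := tangent a (a + t).
have h2 := tangent (a + t) a.
have ht := @taylor1 R df ddf gam2 a (a + t) hd2 g2 hl2.
move: ht; rewrite ler_norml => /andP[_ ht].
have e : a + t - a = t by ring.
rewrite e in h1 ht.
have e2 : a - (a + t) = - t by ring.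
rewrite e2 in h2.
have tt0 : 0 < t * t by rewrite mulr_gt0.
rewrite -(ler_pM2l tt0).
have : 0 <= (df (a + t) - df a) * t by lra.
move: ht; set D := df (a + t) - df a => ht hD.
have : D * t <= (ddf a * t + gam2 * t ^+ 2) * t by rewrite ler_pM2r //; lra.
move=> h3; nra.
Qed.
End Conv.

Section Vec.
Variable R : realType.
Variable d : nat.
Implicit Types u v w : 'cV[R]_d.

Lemma dotvE u v : dotv u v = \sum_i u i 0 * v i 0.
Proof. by rewrite /dotv !mxE; apply: eq_bigr => i _; rewrite mxE. Qed.

Lemma dotvC u v : dotv u v = dotv v u.
Proof. by rewrite !dotvE; apply: eq_bigr => i _; rewrite mulrC. Qed.

Lemma dotvDr u v w : dotv u (v + w) = dotv u v + dotv u w.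
Proof. by rewrite !dotvE -big_split; apply: eq_bigr => i _; rewrite mxE mulrDr. Qed.

Lemma dotvBr u v w : dotv u (v - w) = dotv u v - dotv u w.
Proof.
rewrite !dotvE -sumrB; apply: eq_bigr => i _; rewrite !mxE mulrBr //.
Qed.

Lemma dotvZr u c v : dotv u (c *: v) = c * dotv u v.
Proof. by rewrite !dotvE mulr_sumr; apply: eq_bigr => i _; rewrite mxE mulrCA. Qed.

Lemma dotv_sumr (I : finType) u (F : I -> 'cV[R]_d) :
  dotv u (\sum_j F j) = \sum_j dotv u (F j).
Proof.
rewrite dotvE (eq_bigr (fun i => \sum_j u i 0 * F j i 0)); last first.
  by move=> i _; rewrite summxE mulr_sumr.
by rewrite exchange_big /=; apply: eq_bigr => j _; rewrite dotvE.
Qed.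

Lemma sumsq_ge0 v : 0 <= \sum_i v i 0 ^+ 2.
Proof. by apply: sumr_ge0 => i _; rewrite sqr_ge0. Qed.

Lemma norm2_ge0 v : 0 <= norm2 v.
Proof. exact: sqrtr_ge0. Qed.

Lemma norm2_sq v : norm2 v ^+ 2 = dotv v v.
Proof.
rewrite /norm2 sqr_sqrtr ?sumsq_ge0 // dotvE.
by apply: eq_bigr => i _; rewrite expr2.
Qed.

Lemma dotv_ge0 v : 0 <= dotv v v.
Proof. by rewrite -norm2_sq sqr_ge0. Qed.

Lemma dotvZl u c v : dotv (c *: u) v = c * dotv u v.
Proof. by rewrite dotvC dotvZr dotvC. Qed.

Lemma dotvBl u v w : dotv (u - v) w = dotv u w - dotv v w.
Proof. by rewrite dotvC dotvBr !(dotvC w). Qed.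

Lemma dotvDl u v w : dotv (u + v) w = dotv u w + dotv v w.
Proof. by rewrite dotvC dotvDr !(dotvC w). Qed.

Lemma dotv_eq0 v : dotv v v = 0 -> v = 0.
Proof.
rewrite dotvE => h; apply/matrixP => i j; rewrite !mxE (ord1 j).
have h1 : forall a : 'I_d, predT a -> 0 <= v a 0 * v a 0.
  by move=> a _; rewrite -expr2 sqr_ge0.
have h2 := @psumr_eq0P _ _ predT (fun i => v i 0 * v i 0) h1 h i isT.
by have /eqP := h2; rewrite mulf_eq0 orbb => /eqP.
Qed.

Lemma CS u v : dotv u v ^+ 2 <= dotv u u * dotv v v.
Proof.
set a := dotv v v; set b := dotv u v.
have a0 : 0 <= a by apply: dotv_ge0.
case: (ltrP 0 a) => ha; last first.
  have a00 : a = 0 by apply/eqP; rewrite eq_le ha a0.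
  have v0 := @dotv_eq0 v a00.
  rewrite /b v0 dotvE big1; last by move=> i _; rewrite mxE mulr0.
  by rewrite expr2 mul0r mulr_ge0 // dotv_ge0.
have := dotv_ge0 (a *: u - b *: v).
rewrite dotvBl !dotvBr !dotvZl !dotvZr -/a -/b (dotvC v u) -/b.
move=> h.
have : 0 <= a * (a * dotv u u - b ^+ 2) by move: h; set U := dotv u u => h; nra.
by rewrite pmulr_rge0 // subr_ge0 mulrC.
Qed.

Lemma CSn u v : `|dotv u v| <= norm2 u * norm2 v.
Proof.
have h := CS u v; rewrite -!norm2_sq in h.
have n1 := norm2_ge0 u; have n2 := norm2_ge0 v.
rewrite -exprMn in h.
move: h; set c := norm2 u * norm2 v; set b := dotv u v => h.
have c0 : 0 <= c by rewrite mulr_ge0.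
rewrite ler_norml; apply/andP; split; nra.
Qed.

Lemma norm2_dot v : norm2 v = Num.sqrt (dotv v v).
Proof. by rewrite -norm2_sq sqrtr_sqr ger0_norm ?norm2_ge0. Qed.

Lemma norm2Z c v : norm2 (c *: v) = `|c| * norm2 v.
Proof.
by rewrite !norm2_dot dotvZl dotvZr mulrA -expr2 sqrtrM ?sqr_ge0 // sqrtr_sqr.
Qed.

Lemma norm2D u v : norm2 (u + v) <= norm2 u + norm2 v.
Proof.
rewrite [X in X <= _]norm2_dot -[X in _ <= X]ger0_norm ?addr_ge0 ?norm2_ge0 //.
rewrite -sqrtr_sqr ler_wsqrtr // dotvDl !dotvDr (dotvC v u) -!norm2_sq.
have := CSn u v; rewrite ler_norml => /andP[_ h].
move: h; set b := dotv u v; set p := norm2 u; set q := norm2 v => h.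
nra.
Qed.

Lemma norm2_0 : norm2 (0 : 'cV[R]_d) = 0.
Proof. by rewrite norm2_dot dotvE big1 ?sqrtr0 // => i _; rewrite mxE mul0r. Qed.

Lemma norm2_sum (I : finType) (P : pred I) (F : I -> 'cV[R]_d) :
  norm2 (\sum_(i | P i) F i) <= \sum_(i | P i) norm2 (F i).
Proof.
apply: (big_ind2 (fun a b => norm2 a <= b)).
- by rewrite norm2_0.
- by move=> x1 x2 y1 y2 h1 h2; apply: le_trans (norm2D _ _) _; apply: lerD.
- by [].
Qed.

Lemma norm2_eq0 v : norm2 v = 0 -> v = 0.
Proof. by move=> h; apply: dotv_eq0; rewrite -norm2_sq h expr2 mul0r. Qed.
End Vec.

Section GSTB.
Variable R : realType.
Variables (J L : nat) (h : 'I_J -> R -> R) (g : nat) (S : 'M[R]_g) (A B : R).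
Hypothesis frame : wavelet_frame h S A B.

Lemma norm2_rho (v : 'cV[R]_g) : norm2 (rho v) = norm2 v.
Proof.
by rewrite /norm2; congr Num.sqrt; apply: eq_bigr => i _; rewrite mxE real_normK // num_real.
Qed.

Lemma Phi_cons (x : 'cV[R]_g) j p :
  Phi_path h S x (j :: p) = Phi_path h S (rho (spec_filter (h j) S *m x)) p.
Proof. by []. Qed.

Lemma tuple_sum l : forall x : 'cV[R]_g,
  \sum_(t : l.-tuple 'I_J) norm2 (Phi_path h S x t) ^+ 2 <= B ^+ (2 * l) * norm2 x ^+ 2.
Proof.
elim: l => [|l IH] x.
  rewrite (eq_bigr (fun _ => norm2 x ^+ 2)); last first.
    by move=> t _; rewrite (tuple0 t).
  by rewrite sumr_const card_tuple expn0 muln0 expr0 mul1r.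
rewrite (reindex (fun p : 'I_J * l.-tuple 'I_J => [tuple of p.1 :: p.2])); last first.
  exists (fun t : l.+1.-tuple 'I_J => (thead t, [tuple of behead t])).
    move=> [j t] _ /=; rewrite theadE; congr pair; exact: val_inj.
  by move=> t _ /=; rewrite [RHS]tuple_eta.
rewrite -(pair_big predT predT (fun j (t : l.-tuple 'I_J) => norm2 (Phi_path h S x (j :: t)) ^+ 2)) /=.
apply: (@le_trans _ _ (\sum_j B ^+ (2 * l) * norm2 (spec_filter (h j) S *m x) ^+ 2)).
  apply: ler_sum => j _; rewrite (eq_bigr (fun t : l.-tuple 'I_J => norm2 (Phi_path h S (rho (spec_filter (h j) S *m x)) t) ^+ 2)) //.
  by apply: le_trans (IH _) _; rewrite norm2_rho.
rewrite -mulr_sumr mulnS exprD [B ^+ 2 * _]mulrC -mulrA ler_wpM2l //.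
  by rewrite exprM exprn_ge0 // sqr_ge0.
by case: (frame x).
Qed.

Lemma phi_bound (x : 'cV[R]_g) p :
  phi_path h S x p ^+ 2 <= (g%:R ^+ 2)^-1 * g%:R * norm2 (Phi_path h S x p) ^+ 2.
Proof.
rewrite /phi_path exprMn exprVn -mulrA ler_wpM2l ?invr_ge0 ?sqr_ge0 //.
set v := Phi_path h S x p.
have e1 : \sum_a v a 0 = dotv (const_mx 1) v.
  by rewrite dotvE; apply: eq_bigr => a _; rewrite mxE mul1r.
have e2 : dotv (const_mx 1 : 'cV[R]_g) (const_mx 1) = g%:R.
  by rewrite dotvE (eq_bigr (fun _ => 1)) ?sumr_const ?card_ord // => a _; rewrite !mxE mulr1.
by rewrite e1 norm2_sq -e2; apply: CS.
Qed.

Lemma normx_bound (x : 'cV[R]_g) : (forall a, `|x a 0| <= 1) -> norm2 x ^+ 2 <= g%:R.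
Proof.
move=> hx; rewrite /norm2 sqr_sqrtr ?sumsq_ge0 //.
have -> : (g%:R : R) = \sum_(a < g) 1 by rewrite sumr_const card_ord.
apply: ler_sum => a _.
rewrite -real_normK ?num_real // expr2 -[X in _ <= X]mulr1.
by apply: ler_pM => //; apply: normr_ge0.
Qed.

Lemma gst_bound (x : 'cV[R]_g) : (forall a, `|x a 0| <= 1) ->
  norm2 (@gst R J L h g S x) ^+ 2 <= \sum_(l < L) B ^+ (2 * l).
Proof.
move=> hx.
rewrite /norm2 sqr_sqrtr ?sumsq_ge0 //.
rewrite (eq_bigr (fun i => phi_path h S x (tval (projT2 (enum_val i))) ^+ 2)); last first.
  by move=> i _; rewrite mxE.
rewrite -(big_enum_val (fun p : gpath J L => phi_path h S x (tval (projT2 p)) ^+ 2)) /=.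
have := sig_big_dep (fun _ => true) (fun i => (fun _ => true))
   (fun (l : 'I_L) (t : l.-tuple 'I_J) => phi_path h S x (tval t) ^+ 2).
rewrite /= => <-.
set c := (g%:R ^+ 2)^-1 * (g%:R : R).
have c0 : 0 <= c by rewrite mulr_ge0 ?invr_ge0 ?sqr_ge0 ?ler0n.
have cx : c * norm2 x ^+ 2 <= 1.
  apply: (le_trans (ler_wpM2l c0 (normx_bound hx))).
  rewrite /c; case: (posnP g) => [->|gp]; first by rewrite !mulr0 ler01.
  have gn : (g%:R : R) != 0 by rewrite pnatr_eq0 -lt0n.
  by rewrite -mulrA -expr2 mulVf ?sqrf_eq0.
apply: ler_sum => l _.
apply: (@le_trans _ _ (\sum_(t : l.-tuple 'I_J) c * norm2 (Phi_path h S x t) ^+ 2)).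
  by apply: ler_sum => t _; apply: phi_bound.
rewrite -mulr_sumr.
apply: (le_trans (ler_wpM2l c0 (tuple_sum l x))).
rewrite mulrCA -[X in _ <= X]mulr1 ler_wpM2l //.
by rewrite exprM exprn_ge0 // sqr_ge0.
Qed.
End GSTB.

Lemma grad_zero (R : realType) (Y : Type) (n d : nat) (z : 'I_n -> 'cV[R]_d)
  (y : 'I_n -> Y) (ell ell1 : R -> Y -> R) (lam gam1 : R) (w : 'cV[R]_d) :
  0 <= lam -> 0 <= gam1 ->
  (forall (yy : Y) (s : R), is_derive s 1 (fun t => ell t yy) (ell1 s yy)) ->
  (forall i (s t : R), `|ell1 s (y i) - ell1 t (y i)| <= gam1 * `|s - t|) ->
  (forall w', Lobj ell lam z y w <= Lobj ell lam z y w') ->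
  gradL ell1 lam z y w = 0.
Proof.
move=> l0 g0 hd hl hmin.
set G := gradL ell1 lam z y w.
apply: dotv_eq0; apply/eqP; rewrite eq_le dotv_ge0 andbT.
set K := \sum_i (gam1 * dotv G (z i) ^+ 2 + lam / 2 * dotv G G).
have K0 : 0 <= K.
  apply: sumr_ge0 => i _; apply: addr_ge0; apply: mulr_ge0 => //.
  - exact: sqr_ge0.
  - exact: divr_ge0.
  - exact: dotv_ge0.
apply: (@small_nonpos R _ K K0) => t /andP[t0 t1].
have hm := hmin (w - t *: G).
rewrite -subr_ge0 /Lobj -sumrB in hm.
have eG : dotv G G = \sum_i (ell1 (dotv w (z i)) (y i) * dotv G (z i) + lam * dotv w G).
  rewrite {2}/G /gradL dotv_sumr; apply: eq_bigr => i _.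
  by rewrite dotvDr !dotvZr (dotvC G w).
have : \sum_i (ell (dotv (w - t *: G) (z i)) (y i) + lam / 2 * norm2 (w - t *: G) ^+ 2 -
      (ell (dotv w (z i)) (y i) + lam / 2 * norm2 w ^+ 2))
   <= \sum_i (- t * (ell1 (dotv w (z i)) (y i) * dotv G (z i) + lam * dotv w G)
          + t * t * (gam1 * dotv G (z i) ^+ 2 + lam / 2 * dotv G G)).
  apply: ler_sum => i _.
  rewrite !norm2_sq !(dotvBl, dotvBr, dotvZl, dotvZr) (dotvC G w).
  have ht := @taylor1 R (fun s => ell s (y i)) (fun s => ell1 s (y i)) gam1
     (dotv w (z i)) (dotv w (z i) - t * dotv G (z i)) (fun s => hd (y i) s) g0 (hl i).
  move: ht; rewrite ler_norml => /andP[_ ht].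
  move: ht; set a := dotv w (z i); set b := dotv G (z i); set e := ell (a - t * b) (y i).
  set e0 := ell a (y i); set e1 := ell1 a (y i).
  set ww := dotv w w; set wg := dotv w G; set gg := dotv G G.
  have -> : a - t * b - a = - (t * b) by ring.
  move=> ht.
  have -> : lam / 2 * (ww - t * wg - (t * wg - t * (t * gg))) = lam / 2 * ww - t * (lam * wg) + t * t * (lam / 2 * gg) by field.
  have : gam1 * (- (t * b)) ^+ 2 = t * t * (gam1 * b ^+ 2) by ring.
  move=> e2; rewrite e2 in ht.
  lra.
rewrite [X in _ <= X -> _]big_split /= -!mulr_sumr -eG -/K => h2.
have := le_trans hm h2 => h3.
rewrite -(ler_pM2l t0); lra.
Qed.

Section Hess.
Variables (R : realType) (Y : Type) (n d : nat) (z : 'I_n -> 'cV[R]_d)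
  (y : 'I_n -> Y) (ell2 : R -> Y -> R) (lam : R) (w : 'cV[R]_d).

Lemma zzT_mul (u v : 'cV[R]_d) : u *m u^T *m v = dotv u v *: u.
Proof.
rewrite -mulmxA [u^T *m v]mx11_scalar -/(dotv u v) mul_mx_scalar //.
Qed.

Lemma hess_mul v : hessL ell2 lam z y w *m v =
  \sum_i ((ell2 (dotv w (z i)) (y i) * dotv (z i) v) *: z i + lam *: v).
Proof.
rewrite /hessL mulmx_suml; apply: eq_bigr => i _.
by rewrite mulmxDl -scalemxAl zzT_mul scalerA mul_scalar_mx.
Qed.

Lemma hess_quad v : dotv v (hessL ell2 lam z y w *m v) =
  \sum_i (ell2 (dotv w (z i)) (y i) * dotv (z i) v ^+ 2 + lam * dotv v v).
Proof.
rewrite hess_mul dotv_sumr; apply: eq_bigr => i _.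
by rewrite dotvDr !dotvZr (dotvC v (z i)) expr2 mulrA.
Qed.

Hypothesis l0 : 0 < lam.
Hypothesis e2 : forall i s, 0 <= ell2 s (y i).

Lemma hess_lower v : n%:R * lam * dotv v v <= dotv v (hessL ell2 lam z y w *m v).
Proof.
rewrite hess_quad -mulrA.
have -> : (n%:R : R) * (lam * dotv v v) = \sum_(i < n) (lam * dotv v v).
  by rewrite sumr_const card_ord mulr_natl.
apply: ler_sum => i _; rewrite lerDr mulr_ge0 ?e2 ?sqr_ge0 //.
Qed.

Lemma hess_sym : (hessL ell2 lam z y w)^T = hessL ell2 lam z y w.
Proof.
rewrite /hessL linear_sum; apply: eq_bigr => i _.
by rewrite linearD /= linearZ /= trmx_mul trmxK tr_scalar_mx.
Qed.

Hypothesis n0 : (0 < n)%N.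

Lemma hess_unit : hessL ell2 lam z y w \in unitmx.
Proof.
set H := hessL ell2 lam z y w.
rewrite -row_free_unit -kermx_eq0; apply/negPn/negP => hK.
have [i hi] : exists i, row i (kermx H) != 0.
  apply/existsP; move: hK; apply: contraR; rewrite negb_exists => /forallP hr.
  apply/eqP/row_matrixP => i; rewrite row0; exact/eqP/negPn/hr.
set u := row i (kermx H).
have uH : u *m H = 0 by apply/sub_kermxP; exact: row_sub.
have Hv : H *m u^T = 0 by rewrite -[H]hess_sym -trmx_mul uH trmx0.
have z0 : dotv u^T (0 : 'cV[R]_d) = 0.
  by rewrite dotvE big1 // => j _; rewrite !mxE mulr0.
have := hess_lower u^T; rewrite -/H Hv z0 => h.
have np : 0 < n%:R * lam :> R by rewrite mulr_gt0 ?ltr0n.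
have : dotv u^T u^T = 0.
  apply/eqP; rewrite eq_le dotv_ge0 andbT.
  by rewrite -(pmulr_rle0 _ np).
move/dotv_eq0 => /(congr1 trmx); rewrite trmxK trmx0 => u0.
by move: hi; rewrite -/u u0 eqxx.
Qed.

Lemma sol_bound (D : 'cV[R]_d) :
  norm2 (invmx (hessL ell2 lam z y w) *m D) <= norm2 D / (n%:R * lam).
Proof.
set H := hessL ell2 lam z y w.
set v := invmx H *m D.
have Hv : H *m v = D by rewrite /v mulKVmx //; apply: hess_unit.
have np : 0 < n%:R * lam :> R by rewrite mulr_gt0 ?ltr0n.
have h := hess_lower v; rewrite -/H Hv -norm2_sq in h.
have h2 := le_trans (ler_norm _) (CSn v D).
have h3 := le_trans h h2.
rewrite ler_pdivlMr // mulrC.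
have p0 := norm2_ge0 v; have q0 := norm2_ge0 D.
move: h3; set p := norm2 v; set q := norm2 D; set c := n%:R * lam => h3.
case: (ltrP 0 p) => hp.
  rewrite -(ler_pM2r hp); nra.
have -> : p = 0 by apply/eqP; rewrite eq_le hp p0.
by rewrite mulr0.
Qed.
End Hess.

Unset Implicit Arguments. Set Strict Implicit.

Theorem theorem4p3
  (R : realType) (J L : nat) (hJ : (0 < J)%N) (hL : (0 < L)%N)
  (h : 'I_J -> R -> R) (A B : R)
  (n : nat) (g : 'I_n -> nat)
  (S : forall i : 'I_n, 'M[R]_(g i)) (x : forall i : 'I_n, 'cV[R]_(g i))
  (Y : Type) (y : 'I_n -> Y)
  (ell ell1 ell2 : R -> Y -> R) (lam C1 C2 gam1 gam2 : R)
  (k : 'I_n) (m : 'I_(g k)) (wstar : 'cV[R]_(gdim J L))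
  (* the n-th graph and its g_n-th node *)
  (hk : nat_of_ord k = n.-1) (hm : nat_of_ord m = (g k).-1)
  (hlam : 0 < lam)
  (* symmetric shift operators *)
  (hsym : forall i, (S i)^T = S i)
  (* ell convex and twice differentiable in s, with derivatives ell1, ell2 *)
  (hconv : forall (yy : Y) (a b t : R), 0 <= t <= 1 ->
     ell (t * a + (1 - t) * b) yy <= t * ell a yy + (1 - t) * ell b yy)
  (hd1 : forall (yy : Y) (s : R), is_derive s 1 (fun t => ell t yy) (ell1 s yy))
  (hd2 : forall (yy : Y) (s : R), is_derive s 1 (fun t => ell1 t yy) (ell2 s yy)) :
  let x' : 'cV[R]_(g k) := \col_a (if a == m then 0 else x k a 0) in
  let S' : 'M[R]_(g k) :=
    \matrix_(a, b) (if (a == m) || (b == m) then 0 else S k a b) in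
  let z : 'I_n -> 'cV[R]_(gdim J L) := fun i => @gst R J L h _ (S i) (x i) in
  let z' : 'I_n -> 'cV[R]_(gdim J L) :=
    fun i => if i == k then @gst R J L h _ S' x' else z i in
  (* frame property for all shift operators considered *)
  0 < A -> A <= B ->
  (forall i, wavelet_frame h (S i) A B) -> wavelet_frame h S' A B ->
  (* standing assumptions (1)-(5) *)
  (forall i (w : 'cV[R]_(gdim J L)),
     norm2 (ell1 (dotv w (z i)) (y i) *: z i) <= C1 /\
     norm2 (ell1 (dotv w (z' i)) (y i) *: z' i) <= C1) ->
  (forall i (w : 'cV[R]_(gdim J L)),
     `|ell1 (dotv w (z i)) (y i)| <= C2 /\ `|ell1 (dotv w (z' i)) (y i)| <= C2) ->
  (forall i (s t : R), `|ell1 s (y i) - ell1 t (y i)| <= gam1 * `|s - t|) ->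
  (forall i (s t : R), `|ell2 s (y i) - ell2 t (y i)| <= gam2 * `|s - t|) ->
  (forall i (a : 'I_(g i)), `|x i a 0| <= 1) ->
  (* w* = argmin_w L(w, D) *)
  (forall w, Lobj ell lam z y wstar <= Lobj ell lam z y w) ->
  let Hw := hessL ell2 lam z' y wstar in
  let Delta := gradL ell1 lam z y wstar - gradL ell1 lam z' y wstar in
  let w' := wstar + invmx Hw *m Delta in
  let F := Num.sqrt (\sum_(l < L) B ^+ (2 * l)) in
  norm2 (gradL ell1 lam z' y w') <= 4 * gam2 * C1 ^+ 2 * F ^+ 3 / (lam ^+ 2 * n%:R).
Proof.
move=> x' S' z z' A0 AB frS frS' h1 h2 h3 h4 h5 hmin.
cbv zeta.
set Hw := hessL ell2 lam z' y wstar.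
set Delta := gradL ell1 lam z y wstar - gradL ell1 lam z' y wstar.
set F := Num.sqrt _.
set dd := invmx Hw *m Delta.
have n0 : (0 < n)%N by apply: leq_ltn_trans (leq0n k) (ltn_ord k).
have g1 : 0 <= gam1 := lip_ge0 (h3 k).
have g2 : 0 <= gam2 := lip_ge0 (h4 k).
have e2 : forall i s, 0 <= ell2 s (y i).
  move=> i s.
  exact: (@ddf_ge0 R (fun s => ell s (y i)) (fun s => ell1 s (y i))
     (fun s => ell2 s (y i)) gam1 gam2 (hconv (y i)) (hd1 (y i)) (hd2 (y i)) (h3 i) (h4 i) s).
have C10 : 0 <= C1 by have [+ _] := h1 k wstar; apply: le_trans; apply: norm2_ge0.
have grad0 : gradL ell1 lam z y wstar = 0 := grad_zero (ltW hlam) g1 hd1 h3 hmin.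
have F0 : 0 <= F by apply: sqrtr_ge0.
have Fz : forall i, norm2 (z' i) <= F.
  move=> i.
  suff : norm2 (z' i) ^+ 2 <= \sum_(l < L) B ^+ (2 * l).
    move=> hh; rewrite /F -[norm2 _]ger0_norm ?norm2_ge0 // -sqrtr_sqr.
    exact: ler_wsqrtr.
  rewrite /z'; case: eqP => [_|_].
    apply: (gst_bound L frS') => a; rewrite mxE.
    by case: eqP => _; [rewrite normr0 ler01 | apply: h5].
  exact: (gst_bound L (frS i) (h5 i)).
have eD : Delta = ell1 (dotv wstar (z k)) (y k) *: z k - ell1 (dotv wstar (z' k)) (y k) *: z' k.
  rewrite /Delta /gradL -sumrB (bigD1 k) //= big1 ?addr0.
    by apply/matrixP => p q; rewrite !mxE; ring.
  move=> i ne; rewrite /z' (negbTE ne) subrr //.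
have nD : norm2 Delta <= 2 * C1.
  rewrite eD; apply: (le_trans (norm2D _ _)).
  have nN : forall v : 'cV[R]_(gdim J L), norm2 (- v) = norm2 v.
    by move=> v; rewrite -scaleN1r norm2Z normrN normr1 mul1r.
  rewrite nN mulr2n mulrDl mul1r.
  by have [hA hB] := h1 k wstar; apply: lerD.
have np : 0 < n%:R * lam :> R by rewrite mulr_gt0 ?ltr0n.
have ndd : norm2 dd <= 2 * C1 / (n%:R * lam).
  apply: (le_trans (sol_bound z' wstar hlam e2 n0 Delta)).
  by rewrite ler_wpM2r // invr_ge0 ltW.
have Hdd : Hw *m dd = Delta by rewrite /dd mulKVmx //; apply: hess_unit.
set c := fun i => ell1 (dotv (wstar + dd) (z' i)) (y i) - ell1 (dotv wstar (z' i)) (y i)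
   - ell2 (dotv wstar (z' i)) (y i) * dotv (z' i) dd.
have eG : gradL ell1 lam z' y (wstar + dd) = \sum_i c i *: z' i.
  have e0 : gradL ell1 lam z' y wstar + Hw *m dd = 0.
    by rewrite Hdd /Delta addrC subrK grad0.
  have -> : gradL ell1 lam z' y (wstar + dd) = gradL ell1 lam z' y (wstar + dd) - (gradL ell1 lam z' y wstar + Hw *m dd) by rewrite e0 subr0.
  rewrite /Hw hess_mul /gradL -big_split -sumrB /=.
  apply: eq_bigr => i _; apply/matrixP => p q; rewrite !mxE /c; ring.
rewrite eG.
set q := norm2 dd.
have q0 : 0 <= q by apply: norm2_ge0.
have hc : forall i, norm2 (c i *: z' i) <= gam2 * q ^+ 2 * F ^+ 3.
  move=> i; rewrite norm2Z.
  have ht := @taylor1 R (fun s => ell1 s (y i)) (fun s => ell2 s (y i)) gam2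
     (dotv wstar (z' i)) (dotv (wstar + dd) (z' i)) (hd2 (y i)) g2 (h4 i).
  rewrite dotvDl in ht.
  have ee : dotv wstar (z' i) + dotv dd (z' i) - dotv wstar (z' i) = dotv (z' i) dd.
    by rewrite (dotvC dd); ring.
  rewrite ee in ht.
  rewrite /c dotvDl.
  have cs := CS (z' i) dd; rewrite -!norm2_sq in cs.
  have fz := Fz i; have f0 := norm2_ge0 (z' i).
  move: ht cs fz f0; set e := dotv (z' i) dd; set f := norm2 (z' i).
  set a := `| _ | => ht cs fz f0.
  have a0 : 0 <= a by apply: normr_ge0.
  have h6 : a <= gam2 * (f ^+ 2 * q ^+ 2) by apply: (le_trans ht); rewrite ler_wpM2l.
  have h7 : f ^+ 2 * q ^+ 2 <= F ^+ 2 * q ^+ 2.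
    by rewrite ler_wpM2r ?sqr_ge0 //; nra.
  have h8 : a * f <= gam2 * (F ^+ 2 * q ^+ 2) * F.
    apply: ler_pM => //; apply: (le_trans h6); rewrite ler_wpM2l //.
  apply: (le_trans h8); rewrite !exprS expr0; lra.
apply: (le_trans (norm2_sum _ _)).
apply: (le_trans (ler_sum _ (fun i _ => hc i))).
rewrite sumr_const card_ord -[_ *+ n]mulr_natl.
set cc := 2 * C1 / (n%:R * lam).
have cc0 : 0 <= cc by rewrite /cc divr_ge0 ?mulr_ge0 // ltW.
have hq : q ^+ 2 <= cc ^+ 2 by move: ndd; rewrite -/q -/cc => ndd; nra.
have F3 : 0 <= F ^+ 3 by rewrite exprn_ge0.
have nr0 : (n%:R : R) != 0 by rewrite pnatr_eq0 -lt0n.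
have l0 : lam != 0 by rewrite gt_eqF.
apply: (@le_trans _ _ (n%:R * (gam2 * cc ^+ 2 * F ^+ 3))).
  rewrite ler_wpM2l ?ler0n // ler_wpM2r // ler_wpM2l //.
rewrite /cc le_eqVlt; apply/orP; left; apply/eqP; field.
by rewrite nr0 l0.
Qed.
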